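(* Let $\mathcal B$ be a finite set of finite algebras of signature $F$. Then the following are equivalent: (1) the algebras in $\mathcal B$ are quasi-primal and share a common ternary discriminator term; (2) for all $n\in\mathbb N$, if $\{u_A\colon A^n\to A\mid \mathbf A\in\mathcal B\}$ is a family of $n$-ary operations indexed by $\mathcal B$ such that, for all $\mathbf A_1,\mathbf A_2\in\mathcal B$, the pair $(u_{A_1},u_{A_2})$ preserves the graph of every partial isomorphism between $\mathbf A_1$ and $\mathbf A_2$, then there is a term $t$ in the signature $F$ with $u_A=t^{\mathbf A}$ for all $\mathbf A\in\mathcal B$; (3) $\mathcal B$ generates a congruence-distributive and congruence-permutable variety and, for all $\mathbf A\in\mathcal B$, every non-trivial subalgebra of $\mathbf A$ is simple; (4) $\mathcal B$ has a majority term and, for all $\mathbf A_1,\mathbf A_2\in\mathcal B$, every subalgebra of $\mathbf A_1\times\mathbf A_2$ is either the product of a subalgebra of $\mathbf A_1$ and a subalgebra of $\mathbf A_2$ or is the graph of a partial isomorphism between $\mathbf A_1$ and $\mathbf A_2$.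
   Context: The ternary discriminator on a set $A$ is $\tau(x,y,z)=x$ if $x\ne y$, $=z$ if $x=y$. A finite algebra is quasi-primal if $\tau$ is a term function of it; algebras share a common ternary discriminator term if a single ternary term induces $\tau$ on each. For $u_A\colon A^n\to A$, $u_B\colon B^n\to B$ and $r\subseteq A\times B$, the pair $(u_A,u_B)$ preserves $r$ if $(a_1,b_1),\dots,(a_n,b_n)\in r$ implies $(u_A(a_1,\dots,a_n),u_B(b_1,\dots,b_n))\in r$. A partial isomorphism between $\mathbf A$ and $\mathbf B$ is an isomorphism from a subalgebra of $\mathbf A$ onto a subalgebra of $\mathbf B$. $\mathcal B$ has a majority term if there is a ternary term $m$ with $m^{\mathbf A}(x,x,y)=m^{\mathbf A}(x,y,x)=m^{\mathbf A}(y,x,x)=x$ for all $\mathbf A\in\mathcal B$. *)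

(* Defs.v *)
From mathcomp Require Import all_boot.
Set Implicit Arguments. Unset Strict Implicit. Unset Printing Implicit Defensive.

Record signature := Signature { op_sym : Type; arity : op_sym -> nat }.

Record algebra (F : signature) := Algebra {
  carrier :> Type;
  interp : forall f : op_sym F, ('I_(arity f) -> carrier) -> carrier }.
Arguments Algebra {F} carrier interp.
Arguments interp {F} _ f _.

Inductive term (F : signature) (X : Type) : Type :=
  | Var : X -> term F X
  | App : forall f : op_sym F, ('I_(arity f) -> term F X) -> term F X.
Arguments Var {F X} x.
Arguments App {F X} f ts.

Fixpoint eval (F : signature) (X : Type) (A : algebra F) (v : X -> A)
    (t : term F X) : A :=
  match t with
  | Var x => v x
  | App f ts => interp A f (fun i => @eval F X A v (ts i))
  end.
Arguments eval {F X} A v t.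

Definition finite_algebra (F : signature) (A : algebra F) : Prop :=
  inhabited A /\ exists (n : nat) (e : 'I_n -> A), forall x : A, exists i, e i = x.
Arguments finite_algebra {F} A.

Definition v3 (A : Type) (x y z : A) : 'I_3 -> A :=
  fun i => match val i with 0 => x | 1 => y | _ => z end.
Arguments v3 {A} x y z.

Definition ternary_op (F : signature) (A : algebra F) (t : term F 'I_3)
    (x y z : A) : A := eval A (v3 x y z) t.
Arguments ternary_op {F} A t x y z.

Definition is_discriminator (A : Type) (g : A -> A -> A -> A) : Prop :=
  forall x y z, (x <> y -> g x y z = x) /\ (x = y -> g x y z = z).
Arguments is_discriminator {A} g.

Definition quasi_primal (F : signature) (A : algebra F) : Prop :=
  finite_algebra A /\ exists t : term F 'I_3, is_discriminator (ternary_op A t).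
Arguments quasi_primal {F} A.

(** Subuniverses (possibly empty) = carriers of subalgebras. *)
Definition subuniverse (F : signature) (A : algebra F) (S : A -> Prop) : Prop :=
  forall f (args : 'I_(arity f) -> A), (forall i, S (args i)) -> S (interp A f args).
Arguments subuniverse {F} A S.

Definition sub_alg (F : signature) (A : algebra F) (S : A -> Prop)
    (HS : subuniverse A S) : algebra F :=
  Algebra {x : A | S x}
    (fun f args => exist _ (interp A f (fun i => sval (args i)))
                          (HS f _ (fun i => proj2_sig (args i)))).
Arguments sub_alg {F A S} HS.

Definition prod_alg (F : signature) (A B : algebra F) : algebra F :=
  Algebra (A * B)%type
    (fun f args => (interp A f (fun i => (args i).1), interp B f (fun i => (args i).2))).
Arguments prod_alg {F} A B.

Definition is_partial_iso (F : signature) (A B : algebra F)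
    (S1 : A -> Prop) (S2 : B -> Prop) (h : A -> B) : Prop :=
  [/\ subuniverse A S1 /\ subuniverse B S2,
      (forall x, S1 x -> S2 (h x)),
      (forall x y, S1 x -> S1 y -> h x = h y -> x = y),
      (forall y, S2 y -> exists2 x, S1 x & h x = y) &
      (forall f (args : 'I_(arity f) -> A), (forall i, S1 (args i)) ->
          h (interp A f args) = interp B f (fun i => h (args i)))].
Arguments is_partial_iso {F A B} S1 S2 h.

Definition partial_iso_graph (F : signature) (A B : algebra F)
    (r : A -> B -> Prop) : Prop :=
  exists (S1 : A -> Prop) (S2 : B -> Prop) (h : A -> B),
    is_partial_iso S1 S2 h /\ (forall a b, r a b <-> S1 a /\ h a = b).
Arguments partial_iso_graph {F A B} r.

Definition preserves (n : nat) (A B : Type) (uA : ('I_n -> A) -> A)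
    (uB : ('I_n -> B) -> B) (r : A -> B -> Prop) : Prop :=
  forall (a : 'I_n -> A) (b : 'I_n -> B),
    (forall i, r (a i) (b i)) -> r (uA a) (uB b).
Arguments preserves {n A B} uA uB r.

Definition congruence (F : signature) (A : algebra F) (th : A -> A -> Prop) : Prop :=
  [/\ (forall x, th x x), (forall x y, th x y -> th y x),
      (forall x y z, th x y -> th y z -> th x z) &
      (forall f (a b : 'I_(arity f) -> A), (forall i, th (a i) (b i)) ->
          th (interp A f a) (interp A f b))].
Arguments congruence {F} A th.

Definition cong_join (F : signature) (A : algebra F) (al be : A -> A -> Prop)
    (x y : A) : Prop :=
  forall th, congruence A th -> (forall u v, al u v -> th u v) ->
    (forall u v, be u v -> th u v) -> th x y.
Arguments cong_join {F} A al be x y.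

Definition cong_meet (A : Type) (al be : A -> A -> Prop) (x y : A) : Prop :=
  al x y /\ be x y.
Arguments cong_meet {A} al be x y.

Definition cong_distributive (F : signature) (A : algebra F) : Prop :=
  forall al be ga, congruence A al -> congruence A be -> congruence A ga ->
    forall x y, cong_meet al (cong_join A be ga) x y <->
                cong_join A (cong_meet al be) (cong_meet al ga) x y.
Arguments cong_distributive {F} A.

Definition cong_permutable (F : signature) (A : algebra F) : Prop :=
  forall al be, congruence A al -> congruence A be ->
    forall x y, (exists z, al x z /\ be z y) <-> (exists z, be x z /\ al z y).
Arguments cong_permutable {F} A.

Definition simple (F : signature) (A : algebra F) : Prop :=
  (exists x y : A, x <> y) /\
  forall th, congruence A th -> (forall x y, th x y -> x = y) \/ (forall x y, th x y).
Arguments simple {F} A.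

(** Identities and the variety generated by a family of algebras
    (= Mod Id(B), the class of all algebras satisfying every identity of B). *)
Definition satisfies (F : signature) (A : algebra F) (n : nat)
    (s t : term F 'I_n) : Prop :=
  forall v : 'I_n -> A, eval A v s = eval A v t.
Arguments satisfies {F} A {n} s t.

Definition in_variety_gen (F : signature) (I : Type) (B : I -> algebra F)
    (C : algebra F) : Prop :=
  forall n (s t : term F 'I_n), (forall i, satisfies (B i) s t) -> satisfies C s t.
Arguments in_variety_gen {F I} B C.

Definition majority_term (F : signature) (I : Type) (B : I -> algebra F) : Prop :=
  exists m : term F 'I_3, forall i (x y : B i),
    [/\ ternary_op (B i) m x x y = x, ternary_op (B i) m x y x = x &
        ternary_op (B i) m y x x = x].
Arguments majority_term {F I} B.

Definition cond1 (F : signature) (I : Type) (B : I -> algebra F) : Prop :=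
  (forall i, quasi_primal (B i)) /\
  exists t : term F 'I_3, forall i, is_discriminator (ternary_op (B i) t).
Arguments cond1 {F I} B.

Definition cond2 (F : signature) (I : Type) (B : I -> algebra F) : Prop :=
  forall (n : nat) (u : forall i, ('I_n -> B i) -> B i),
    (forall i j (r : B i -> B j -> Prop), partial_iso_graph r -> preserves (u i) (u j) r) ->
    exists t : term F 'I_n, forall i (a : 'I_n -> B i), u i a = eval (B i) a t.
Arguments cond2 {F I} B.

Definition cond3 (F : signature) (I : Type) (B : I -> algebra F) : Prop :=
  (forall C : algebra F, in_variety_gen B C -> cong_distributive C /\ cong_permutable C) /\
  (forall i (S : B i -> Prop) (HS : subuniverse (B i) S),
     (exists x y, [/\ S x, S y & x <> y]) -> simple (sub_alg HS)).
Arguments cond3 {F I} B.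

Definition cond4 (F : signature) (I : Type) (B : I -> algebra F) : Prop :=
  majority_term B /\
  forall i j (S : prod_alg (B i) (B j) -> Prop), subuniverse _ S ->
    (exists (S1 : B i -> Prop) (S2 : B j -> Prop),
        [/\ subuniverse _ S1, subuniverse _ S2 & forall a b, S (a, b) <-> S1 a /\ S2 b])
    \/ partial_iso_graph (fun (a : B i) (b : B j) => S (a, b)).
Arguments cond4 {F I} B.

(* Main.v *)
Require Import Defs.
From mathcomp Require Import all_boot.
From Stdlib Require Import FunctionalExtensionality ProofIrrelevance ClassicalEpsilon Classical.
From Stdlib Require List.
Set Implicit Arguments. Unset Strict Implicit. Unset Printing Implicit Defensive.

Lemma fchoice (A B : Type) (R : A -> B -> Prop) :
  (forall x, exists y, R x y) -> exists f : A -> B, forall x, R x (f x).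
Proof.
move=> H; exists (fun x => proj1_sig (constructive_indefinite_description _ (H x))).
by move=> x; case: (constructive_indefinite_description _ (H x)).
Qed.

Fixpoint subst (F : signature) (X Y : Type) (s : X -> term F Y) (t : term F X) : term F Y :=
  match t with Var x => s x | App f ts => App f (fun k => subst s (ts k)) end.

Lemma eval_subst F X Y (A : algebra F) (v : Y -> A) (s : X -> term F Y) t :
  eval A v (subst s t) = eval A (fun x => eval A v (s x)) t.
Proof.
elim: t => [x|f ts IH] //=. congr (interp A f); apply: functional_extensionality => k; exact: IH.
Qed.

Lemma eval_ext F X (A : algebra F) (v w : X -> A) t :
  (forall x, v x = w x) -> eval A v t = eval A w t.
Proof. by move=> H; rewrite (functional_extensionality _ _ H). Qed.

Lemma cong_eval F (A : algebra F) th X (a b : X -> A) t :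
  congruence A th -> (forall x, th (a x) (b x)) -> th (eval A a t) (eval A b t).
Proof.
move=> [_ _ _ Hc] H; elim: t => [x|f ts IH] /=; first exact: H.
by apply: Hc.
Qed.

Lemma sub_eval F (A : algebra F) S X (a : X -> A) t :
  subuniverse A S -> (forall x, S (a x)) -> S (eval A a t).
Proof. by move=> HS H; elim: t => [x|f ts IH] /=; [exact: H | apply: HS]. Qed.

Lemma eval_prod F X (A B : algebra F) (v : X -> prod_alg A B) t :
  eval (prod_alg A B) v t = (eval A (fun x => (v x).1) t, eval B (fun x => (v x).2) t).
Proof.
elim: t => [x|f ts IH] /=; first by case: (v x).
congr pair; congr (interp _ f); apply: functional_extensionality => k; by rewrite IH.
Qed.

Lemma eval_sub F X (A : algebra F) S (HS : subuniverse A S) (v : X -> sub_alg HS) t :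
  sval (eval (sub_alg HS) v t) = eval A (fun x => sval (v x)) t.
Proof.
elim: t => [x|f ts IH] //=.
congr (interp _ f); apply: functional_extensionality => k; by rewrite IH.
Qed.

Lemma sig_eq (A : Type) (P : A -> Prop) (x y : {a | P a}) : sval x = sval y -> x = y.
Proof.
case: x => x Px; case: y => y Py /= E; subst y; by rewrite (proof_irrelevance _ Px Py).
Qed.

Definition o0 : 'I_3 := @Ordinal 3 0 isT.
Definition o1 : 'I_3 := @Ordinal 3 1 isT.
Definition o2 : 'I_3 := @Ordinal 3 2 isT.

Lemma v3_eta (A : Type) (v : 'I_3 -> A) : v3 (v o0) (v o1) (v o2) = v.
Proof.
apply: functional_extensionality => -[[|[|[|m]]] Hm] /=.
- by congr v; apply: val_inj.
- by congr v; apply: val_inj.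
- by congr v; apply: val_inj.
- by [].
Qed.

Lemma v3_map (A B : Type) (g : A -> B) x y z k : g (v3 x y z k) = v3 (g x) (g y) (g z) k.
Proof. by rewrite /v3; case: (val k) => [|[|[|m]]]. Qed.

Lemma ternary_subst F (A : algebra F) (t : term F 'I_3) (s : 'I_3 -> term F 'I_3) x y z :
  ternary_op A (subst s t) x y z =
  ternary_op A t (ternary_op A (s o0) x y z) (ternary_op A (s o1) x y z) (ternary_op A (s o2) x y z).
Proof.
rewrite /ternary_op eval_subst; apply: eval_ext => k.
by rewrite -{1}(v3_eta s) (v3_map (eval A (v3 x y z))).
Qed.

Definition Rect (A B : Type) (S : A * B -> Prop) :=
  forall a a' b0 b, S (a, b0) -> S (a', b0) -> S (a', b) -> S (a, b).

Definition subs_simple F (A : algebra F) :=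
  forall (S : A -> Prop) (HS : subuniverse A S),
     (exists x y, [/\ S x, S y & x <> y]) -> simple (sub_alg HS).

Lemma proj1_sub F (A B : algebra F) (S : prod_alg A B -> Prop) :
  subuniverse _ S -> subuniverse A (fun a => exists b, S (a, b)).
Proof.
move=> HS f args H; have [bs Hb] := fchoice H.
exists (interp B f bs); exact: (HS f (fun k => (args k, bs k)) Hb).
Qed.

Lemma swap_sub F (A B : algebra F) (S : prod_alg A B -> Prop) :
  subuniverse _ S -> subuniverse (prod_alg B A) (fun p => S (p.2, p.1)).
Proof. move=> HS f args H; exact: (HS f (fun k => ((args k).2, (args k).1)) H). Qed.

Lemma half F (A B : algebra F) (S : prod_alg A B -> Prop) (HS : subuniverse _ S) :
  Rect S -> subs_simple A ->
  forall a a' b, S (a, b) -> S (a', b) -> a <> a' ->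
  forall x y, S (x, y) <-> (exists b, S (x, b)) /\ (exists a, S (a, y)).
Proof.
move=> Hr Hs a a' b Sab Sa'b neq.
pose H1 := proj1_sub HS.
pose al (p q : sub_alg H1) := exists b, S (sval p, b) /\ S (sval q, b).
have Hal : congruence (sub_alg H1) al.
  split.
  - by case=> x [c Hc]; exists c.
  - by move=> p q [c [H H']]; exists c.
  - move=> p q r [c [H H']] [d [K K']]; exists d; split => //; exact: Hr H H' K.
  - move=> f p q H; have [bs Hb] := fchoice H.
    exists (interp B f bs); split.
    + exact: (HS f (fun k => (sval (p k), bs k)) (fun k => proj1 (Hb k))).
    + exact: (HS f (fun k => (sval (q k), bs k)) (fun k => proj2 (Hb k))).
have [_ Hsim] := Hs _ H1 (ex_intro _ a (ex_intro _ a' (And3 (ex_intro _ b Sab) (ex_intro _ b Sa'b) neq))).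
have [Hid|Htot] := Hsim al Hal.
  exfalso; apply: neq.
  have := Hid (exist _ a (ex_intro _ b Sab)) (exist _ a' (ex_intro _ b Sa'b)).
  by move=> /(_ (ex_intro _ b (conj Sab Sa'b))) [].
move=> x y; split; first by move=> H; split; [exists y | exists x].
case=> [[c Hc] [a0 Ha0]].
have [d [Hd Hd']] := Htot (exist _ x (ex_intro _ c Hc)) (exist _ a0 (ex_intro _ y Ha0)).
exact: Hr Hd Hd' Ha0.
Qed.

Lemma goursat F (A B : algebra F) (S : prod_alg A B -> Prop) (HS : subuniverse _ S) :
  Rect S -> subs_simple A -> subs_simple B -> inhabited B ->
    (exists (S1 : A -> Prop) (S2 : B -> Prop),
        [/\ subuniverse _ S1, subuniverse _ S2 & forall a b, S (a, b) <-> S1 a /\ S2 b])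
    \/ partial_iso_graph (fun (a : A) (b : B) => S (a, b)).
Proof.
move=> Hr HsA HsB [b00].
have HS1 := proj1_sub HS.
have HS2 : subuniverse B (fun b => exists a, S (a, b)).
  by have := proj1_sub (swap_sub HS).
case: (classic (exists a a' b, [/\ S (a, b), S (a', b) & a <> a'])).
  case=> a [a' [b [H1 H2 H3]]]; left.
  exists (fun a => exists b, S (a, b)), (fun b => exists a, S (a, b)); split => //.
  exact: half H1 H2 H3.
move=> NA.
case: (classic (exists b b' a, [/\ S (a, b), S (a, b') & b <> b'])).
  case=> b [b' [a [H1 H2 H3]]]; left.
  exists (fun a => exists b, S (a, b)), (fun b => exists a, S (a, b)); split => //.
  have Hr' : Rect (fun p : B * A => S (p.2, p.1)).
    by move=> x x' y0 y /= K1 K2 K3; exact: Hr K3 K2 K1.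
  move=> x y; have := half (swap_sub HS) Hr' HsB H1 H2 H3 y x => /=.
  by move=> ->; split; case.
move=> NA0.
have [h Hh] : exists h : A -> B, forall a, (exists b, S (a, b)) -> S (a, h a).
  apply: (@fchoice A B (fun a b => (exists b0, S (a, b0)) -> S (a, b))) => a; case: (classic (exists b, S (a, b))) => [[b Hb]|Hn].
    by exists b.
  by exists b00 => K; case: Hn.
have uniq2 : forall a b b', S (a, b) -> S (a, b') -> b = b'.
  move=> a b b' H H'; apply: NNPP => Hn; apply: NA0; by exists b, b', a.
right; exists (fun a => exists b, S (a, b)), (fun b => exists a, S (a, b)), h; split.
  split; first by split.
  - by move=> x Hx; exists x; exact: Hh.
  - move=> x y Hx Hy E; apply: NNPP => Hn; apply: NA.
    by exists x, y, (h x); split => //; [exact: Hh | rewrite E; exact: Hh].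
  - by move=> y [x Hx]; exists x; [exists y | exact: uniq2 (Hh _ (ex_intro _ y Hx)) Hx].
  - move=> f args Hargs; apply: (uniq2 (interp A f args)).
      exact: Hh (HS1 f args Hargs).
    exact: (HS f (fun k => (args k, h (args k))) (fun k => Hh _ (Hargs k))).
move=> a b; split.
  by move=> H; split; [exists b | exact: uniq2 (Hh _ (ex_intro _ b H)) H].
by case=> Ha <-; exact: Hh.
Qed.

Lemma v3_P (A : Type) (P : A -> Prop) x y z : P x -> P y -> P z -> forall k, P (v3 x y z k).
Proof. by move=> ? ? ? k; rewrite /v3; case: (val k) => [|[|[|m]]]. Qed.

Lemma v3_R (A B : Type) (R : A -> B -> Prop) x y z x' y' z' :
  R x x' -> R y y' -> R z z' -> forall k, R (v3 x y z k) (v3 x' y' z' k).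
Proof. by move=> ? ? ? k; rewrite /v3; case: (val k) => [|[|[|m]]]. Qed.

Lemma ternary_prod F (A B : algebra F) t (p q r : prod_alg A B) :
  ternary_op (prod_alg A B) t p q r = (ternary_op A t p.1 q.1 r.1, ternary_op B t p.2 q.2 r.2).
Proof.
rewrite /ternary_op eval_prod; congr pair; apply: eval_ext => k; [exact: (v3_map fst) | exact: (v3_map snd)].
Qed.

Lemma ternary_sub F (A : algebra F) S (HS : subuniverse A S) t (p q r : sub_alg HS) :
  sval (ternary_op (sub_alg HS) t p q r) = ternary_op A t (sval p) (sval q) (sval r).
Proof. rewrite /ternary_op eval_sub; apply: eval_ext => k; by rewrite (v3_map sval). Qed.

Lemma sub_ternary F (A : algebra F) S t x y z : subuniverse A S -> S x -> S y -> S z ->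
  S (ternary_op A t x y z).
Proof. move=> HS Hx Hy Hz; apply: sub_eval HS _; exact: v3_P. Qed.

Lemma disc_rect F (A B : algebra F) t :
  is_discriminator (ternary_op A t) -> is_discriminator (ternary_op B t) ->
  forall S, subuniverse (prod_alg A B) S -> Rect S.
Proof.
move=> HA HB S HS a a' b0 b H1 H2 H3.
have := sub_ternary t HS H1 H2 H3; rewrite ternary_prod /=.
case: (classic (a = a')) => [<-|n]; first by rewrite (proj2 (HA _ _ _)) // (proj2 (HB _ _ _)).
by rewrite (proj1 (HA _ _ _) n) (proj2 (HB _ _ _)).
Qed.

Lemma disc_simple F (A : algebra F) t : is_discriminator (ternary_op A t) -> subs_simple A.
Proof.
move=> HA S HS [x [y [Sx Sy nxy]]]; split.
  exists (exist _ x Sx), (exist _ y Sy) => E; apply: nxy; exact: (f_equal sval E).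
move=> th Hth; case: (classic (exists p q, th p q /\ p <> q)); last first.
  by move=> Hn; left => p q H; apply: NNPP => Hpq; apply: Hn; exists p, q.
case=> p [q [Hpq npq]]; right.
have key : forall u, th u p.
  move=> u; have [Hr _ _ _] := Hth.
  have := cong_eval t Hth (v3_R (Hr p) Hpq (Hr u)).
  have E1 : ternary_op (sub_alg HS) t p p u = u.
    by apply: sig_eq; rewrite ternary_sub (proj2 (HA _ _ _)).
  have E2 : ternary_op (sub_alg HS) t p q u = p.
    apply: sig_eq; rewrite ternary_sub (proj1 (HA _ _ _)) // => E; apply: npq; exact: sig_eq.
  rewrite /ternary_op in E1 E2; rewrite E1 E2; exact: id.
have [_ Hs Ht _] := Hth.
by move=> u v; apply: Ht (key u) (Hs _ _ (key v)).
Qed.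

Definition mterm F (t : term F 'I_3) := subst (v3 (Var o0) t (Var o2)) t.

Lemma mterm_maj F (A : algebra F) t : is_discriminator (ternary_op A t) ->
  forall x y : A, [/\ ternary_op A (mterm t) x x y = x, ternary_op A (mterm t) x y x = x &
        ternary_op A (mterm t) y x x = x].
Proof.
move=> HA x y; rewrite /mterm !ternary_subst /=.
have T1 : forall a b, ternary_op A t a a b = b by move=> a b; rewrite (proj2 (HA _ _ _)).
have T2 : forall a b, a <> b -> ternary_op A t a b b = a by move=> a b n; rewrite (proj1 (HA _ _ _)).
have T3 : forall a b, ternary_op A t a b a = a.
  by move=> a b; case: (classic (a = b)) => [->|n]; [rewrite T1 | rewrite (proj1 (HA _ _ _))].
have T4 : forall a b, ternary_op A t a b b = a.
  by move=> a b; case: (classic (a = b)) => [->|n]; [rewrite T1 | rewrite T2].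
have V0 : forall a b c, ternary_op A (Var o0) a b c = a by [].
have V2 : forall a b c, ternary_op A (Var o2) a b c = c by [].
rewrite !V0 !V2.
by split; rewrite ?T1 ?T3 ?T4.
Qed.

Lemma c1_c4 F (I : Type) (B : I -> algebra F) :
  (forall i, finite_algebra (B i)) -> cond1 B -> cond4 B.
Proof.
move=> HBfin [Hq [t Ht]]; split.
  by exists (mterm t) => i x y; exact: (mterm_maj (Ht i) x y).
move=> i j S HS; apply: (goursat HS).
- exact: disc_rect (Ht i) (Ht j) S HS.
- exact: disc_simple (Ht i).
- exact: disc_simple (Ht j).
- by case: (HBfin j) => [[x] _]; constructor.
Qed.

Definition dsc (A : Type) (x y z : A) := if excluded_middle_informative (x = y) then z else x.

Lemma dsc_disc (A : Type) : is_discriminator (@dsc A).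
Proof.
by move=> x y z; rewrite /dsc; case: excluded_middle_informative.
Qed.

Lemma c2_c1 F (I : Type) (B : I -> algebra F) :
  (forall i, finite_algebra (B i)) -> cond2 B -> cond1 B.
Proof.
move=> HBfin H2.
case: (H2 3 (fun i a => dsc (a o0) (a o1) (a o2))); last first.
  move=> t Ht.
  have HD : forall i, is_discriminator (ternary_op (B i) t).
    move=> i x y z; rewrite /ternary_op -Ht; exact: dsc_disc.
  by split; [move=> i; split; [exact: HBfin | exists t; exact: HD] | exists t].
move=> i j r [S1 [S2 [h [[_ _ inj _ _] Hr]]]] a b Hab.
  have K : forall k, S1 (a k) /\ h (a k) = b k by move=> k; apply/Hr.
  apply/Hr; rewrite /dsc.
  case: excluded_middle_informative => E.
    case: excluded_middle_informative => E' //; first exact: K.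
    by case: E'; rewrite -(proj2 (K o0)) -(proj2 (K o1)) E.
  case: excluded_middle_informative => E'; last exact: K.
  case: E; apply: inj; [exact: (proj1 (K o0)) | exact: (proj1 (K o1)) |].
  by rewrite (proj2 (K o0)) (proj2 (K o1)).
Qed.

Lemma bp_two F (I : Type) (B : I -> algebra F) n (u : forall i, ('I_n -> B i) -> B i) :
  (forall i j (S : prod_alg (B i) (B j) -> Prop), subuniverse _ S ->
      preserves (u i) (u j) (fun a b => S (a, b))) ->
  forall i j (a : 'I_n -> B i) (b : 'I_n -> B j),
    exists t, u i a = eval (B i) a t /\ u j b = eval (B j) b t.
Proof.
move=> Hp i j a b.
pose S := fun p : prod_alg (B i) (B j) => exists t, eval (B i) a t = p.1 /\ eval (B j) b t = p.2.
have HS : subuniverse _ S.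
  move=> f args H; have [ts Hts] := fchoice H.
  exists (App f ts); split => /=; congr (interp _ f); apply: functional_extensionality => k;
    by case: (Hts k).
have [t [E1 E2]] := Hp i j S HS a b (fun k => ex_intro _ (Var k) (conj erefl erefl)).
by exists t; split.
Qed.

Lemma c4_pres F (I : Type) (B : I -> algebra F) n (u : forall i, ('I_n -> B i) -> B i) :
  cond4 B ->
  (forall i j (r : B i -> B j -> Prop), partial_iso_graph r -> preserves (u i) (u j) r) ->
  forall i j (S : prod_alg (B i) (B j) -> Prop), subuniverse _ S ->
      preserves (u i) (u j) (fun a b => S (a, b)).
Proof.
move=> [_ H4] Hp i j S HS.
case: (H4 i j S HS) => [[S1 [S2 [HS1 HS2 E]]] | G]; last exact: Hp.
have P1 : forall k (T : B k -> Prop), subuniverse _ T -> forall a, (forall x, T (a x)) -> T (u k a).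
  move=> k T HT a Ha.
  have G' : partial_iso_graph (fun x y : B k => T x /\ x = y).
    exists T, T, id; split => //; split => //.
    by move=> y Hy; exists y.
  exact: (proj1 (Hp k k _ G' a a (fun x => conj (Ha x) erefl))).
move=> a b H; apply/E; split.
  by apply: (P1 _ _ HS1 a) => x; case/E: (H x).
by apply: (P1 _ _ HS2 b) => x; case/E: (H x).
Qed.

Lemma eval_subst3 F X (A : algebra F) (a : X -> A) (m : term F 'I_3) s1 s2 s3 :
  eval A a (subst (v3 s1 s2 s3) m) = ternary_op A m (eval A a s1) (eval A a s2) (eval A a s3).
Proof. rewrite eval_subst /ternary_op; apply: eval_ext => k; exact: (v3_map (eval A a)). Qed.

Definition agree F (I : Type) (B : I -> algebra F) n (u : forall i, ('I_n -> B i) -> B i)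
  (t : term F 'I_n) (p : {i : I & 'I_n -> B i}) :=
  u (projT1 p) (projT2 p) = eval (B (projT1 p)) (projT2 p) t.

Lemma bp_list F (I : Type) (B : I -> algebra F) n (u : forall i, ('I_n -> B i) -> B i) :
  majority_term B ->
  (forall i j (S : prod_alg (B i) (B j) -> Prop), subuniverse _ S ->
      preserves (u i) (u j) (fun a b => S (a, b))) ->
  forall L : list {i : I & 'I_n -> B i}, L <> nil ->
    exists t, forall p, List.In p L -> agree u t p.
Proof.
move=> [m Hm] Hp.
suff : forall k L, (length L <= k)%N -> L <> nil -> exists t, forall p, List.In p L -> agree u t p.
  by move=> H L; apply: H (leqnn _).
elim=> [|k IH] [|p1 [|p2 [|p3 r]]] //= Hl _.
- have [t [E _]] := bp_two Hp (projT2 p1) (projT2 p1).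
  by exists t => p [<-|[]].
- have [t [E E']] := bp_two Hp (projT2 p1) (projT2 p2).
  by exists t => p [<-|[<-|[]]].
have [t1 H1] := IH (p2 :: p3 :: r) Hl (fun E => List.nil_cons (esym E)).
have [t2 H2] := IH (p1 :: p3 :: r) Hl (fun E => List.nil_cons (esym E)).
have [t3 H3] := IH (p1 :: p2 :: r) Hl (fun E => List.nil_cons (esym E)).
exists (subst (v3 t1 t2 t3) m) => p Hin; rewrite /agree eval_subst3.
have [M1 M2 M3] := Hm (projT1 p) (u (projT1 p) (projT2 p))
                    (u (projT1 p) (projT2 p)).
case: Hin => [<-|[<-|[<-|Hr]]].
- rewrite -H2 /=; [|by left]; rewrite -H3 /=; [|by left].
  by case: (Hm (projT1 p1) (u (projT1 p1) (projT2 p1)) (eval (B (projT1 p1)) (projT2 p1) t1)).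
- rewrite -H1 /=; [|by left]; rewrite -H3 /=; [|by right; left].
  by case: (Hm (projT1 p2) (u (projT1 p2) (projT2 p2)) (eval (B (projT1 p2)) (projT2 p2) t2)).
- rewrite -H1 /=; [|by right; left]; rewrite -H2 /=; [|by right; left].
  by case: (Hm (projT1 p3) (u (projT1 p3) (projT2 p3)) (eval (B (projT1 p3)) (projT2 p3) t3)).
- rewrite -H1; [|by right; right]; rewrite -H2; [|by right; right]; rewrite -H3; [|by right; right].
  by case: M1.
Qed.

Lemma in_In (T : eqType) (x : T) (s : seq T) : x \in s -> List.In x s.
Proof. elim: s => //= y s IH; rewrite inE => /orP [/eqP ->|/IH]; [by left | by right]. Qed.

Lemma cover F (I : finType) (B : I -> algebra F) n :
  (forall i, finite_algebra (B i)) -> forall s : seq I,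
  exists L : list {i : I & 'I_n -> B i}, forall i, i \in s -> forall a, List.In (existT _ i a) L.
Proof.
move=> HBfin; elim=> [|i s [L HL]]; first by exists nil.
have [_ [k [e He]]] := HBfin i.
have [g Hg] := fchoice He.
exists (List.app (List.map (fun f : {ffun 'I_n -> 'I_k} => existT (fun i => 'I_n -> B i) i (fun x => e (f x)))
   (enum {ffun 'I_n -> 'I_k})) L).
move=> j; rewrite inE; case/orP => [/eqP -> | Hj] a; apply/List.in_app_iff; last by right; exact: HL.
left.
have -> : a = (fun x => e ([ffun x => g (a x)] x)).
  by apply: functional_extensionality => x; rewrite ffunE Hg.
apply: List.in_map; apply: in_In; exact: mem_enum.
Qed.

Lemma c4_c2 F (I : finType) (B : I -> algebra F) :
  (forall i, finite_algebra (B i)) -> inhabited I -> cond4 B -> cond2 B.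
Proof.
move=> HBfin [i0] H4 n u Hp.
have Hpres := c4_pres H4 Hp.
have [L HL] := @cover F I B n HBfin (enum I).
have [[x0] _] := HBfin i0.
have Hne : L <> nil.
  by move=> E; have := HL i0 (mem_enum _ _) (fun _ => x0); rewrite E.
have [t Ht] := bp_list H4.1 Hpres Hne.
by exists t => i a; exact: (Ht (existT _ i a) (HL i (mem_enum _ _) a)).
Qed.

Lemma comp_cong F (C : algebra F) : cong_permutable C ->
  forall al be, congruence C al -> congruence C be ->
  congruence C (fun x y => exists z, al x z /\ be z y).
Proof.
move=> CP al be Ha Hb; have [ar asy atr ac] := Ha; have [br bsy btr bc] := Hb; split.
- by move=> x; exists x.
- move=> x y [z [H1 H2]]; apply/(CP _ _ Ha Hb); exists z; split; [exact: bsy | exact: asy].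
- move=> x y z [a [H1 H2]] [b [K1 K2]].
  have [c [L1 L2]] : exists c, al a c /\ be c b by apply/(CP _ _ Ha Hb); exists y.
  exists c; split; [exact: atr H1 L1 | exact: btr L2 K2].
- move=> f a b H; have [zs Hz] := fchoice H.
  exists (interp C f zs); split; [apply: ac => k; exact: (proj1 (Hz k)) | apply: bc => k; exact: (proj2 (Hz k))].
Qed.

Lemma join_comp F (C : algebra F) : cong_permutable C ->
  forall al be, congruence C al -> congruence C be ->
  forall x y, cong_join C al be x y -> exists z, al x z /\ be z y.
Proof.
move=> CP al be Ha Hb x y H; apply: (H (fun x y => exists z, al x z /\ be z y)); first exact: comp_cong.
- by move=> u v K; exists v; split => //; case: Hb.
- by move=> u v K; exists u; split => //; case: Ha.
Qed.

Lemma meet_cong F (C : algebra F) al be : congruence C al -> congruence C be ->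
  congruence C (cong_meet al be).
Proof.
move=> [ar asy atr ac] [br bsy btr bc]; split.
- by move=> x; split.
- by move=> x y [? ?]; split; auto.
- by move=> x y z [? ?] [? ?]; split; [apply: atr; eassumption | apply: btr; eassumption].
- by move=> f a b H; split; [apply: ac => k; case: (H k) | apply: bc => k; case: (H k)].
Qed.

Lemma transfer F (I : Type) (B : I -> algebra F) (C : algebra F) :
  in_variety_gen B C -> forall (m : term F 'I_3) (a b c d : 'I_3),
  (forall i (x y z : B i), ternary_op (B i) m (v3 x y z a) (v3 x y z b) (v3 x y z c) = v3 x y z d) ->
  forall x y z : C, ternary_op C m (v3 x y z a) (v3 x y z b) (v3 x y z c) = v3 x y z d.
Proof.
move=> Hv m a b c d H x y z.
have K : satisfies C (subst (v3 (Var a) (Var b) (Var c)) m) (Var d).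
  apply: Hv => i v; rewrite eval_subst3 /= -(v3_eta v); exact: H.
by have := K (v3 x y z); rewrite eval_subst3.
Qed.

Lemma maltsev_cp F (C : algebra F) (t : term F 'I_3) :
  (forall x y : C, ternary_op C t x y y = x) -> (forall x y : C, ternary_op C t x x y = y) ->
  cong_permutable C.
Proof.
move=> M1 M2.
have key : forall al be, congruence C al -> congruence C be ->
   forall x y, (exists z, al x z /\ be z y) -> (exists z, be x z /\ al z y).
  move=> al be Ha Hb x y [z [H1 H2]]; exists (ternary_op C t x z y); split.
  - have [br bsy _ _] := Hb.
    have := cong_eval t Hb (v3_R (br x) (bsy _ _ H2) (br y)); change (be (ternary_op C t x y y) (ternary_op C t x z y) -> be x (ternary_op C t x z y)); by rewrite M1.
  - have [ar asy _ _] := Ha.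
    have := cong_eval t Ha (v3_R H1 (ar z) (ar y)); change (al (ternary_op C t x z y) (ternary_op C t z z y) -> al (ternary_op C t x z y) y); by rewrite M2.
by move=> al be Ha Hb x y; split; apply: key.
Qed.

Lemma majority_cd F (C : algebra F) (m : term F 'I_3) :
  cong_permutable C ->
  (forall x y : C, [/\ ternary_op C m x x y = x, ternary_op C m x y x = x &
        ternary_op C m y x x = x]) ->
  cong_distributive C.
Proof.
move=> CP Hm al be ga Ha Hb Hg x y; split.
  case=> Hxy Hj; have [z [H1 H2]] := join_comp CP Hb Hg Hj.
  have [ar asy atr _] := Ha; have [br bsy btr _] := Hb; have [gr gsy gtr _] := Hg.
  have Aw : al (ternary_op C m x z y) x.
    have := cong_eval m Ha (v3_R (ar x) (ar z) (asy _ _ Hxy)).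
    change (al (ternary_op C m x z y) (ternary_op C m x z x) -> al (ternary_op C m x z y) x).
    by case: (Hm x z) => _ -> _.
  have Bw : be x (ternary_op C m x z y).
    have := cong_eval m Hb (v3_R (br x) H1 (br y)).
    change (be (ternary_op C m x x y) (ternary_op C m x z y) -> be x (ternary_op C m x z y)).
    by case: (Hm x y) => -> _ _.
  have Gw : ga (ternary_op C m x z y) y.
    have := cong_eval m Hg (v3_R (gr x) H2 (gr y)).
    change (ga (ternary_op C m x z y) (ternary_op C m x y y) -> ga (ternary_op C m x z y) y).
    by case: (Hm y x) => _ _ ->.
  move=> th [_ _ ttr _] K1 K2; apply: (ttr _ (ternary_op C m x z y)).
    by apply: K1; split => //; exact: asy.
  by apply: K2; split => //; exact: atr Aw Hxy.
move=> Hj; split.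
  by apply: Hj => //; [move=> u v [] | move=> u v []].
move=> th Hth Kb Kg; apply: Hj => // u v [_ H]; [exact: Kb | exact: Kg].
Qed.

Lemma c1_c3 F (I : Type) (B : I -> algebra F) : cond1 B -> cond3 B.
Proof.
move=> [Hq [t Ht]]; split; last by move=> i; exact: disc_simple (Ht i).
move=> C Hv.
have M1 : forall x y : C, ternary_op C t x y y = x.
  move=> x y; apply: (transfer Hv (a := o0) (b := o1) (c := o1) (d := o0) _ x y x) => i a b c /=.
  case: (classic (a = b)) => [->|n]; first by rewrite (proj2 (Ht i _ _ _)).
  by rewrite (proj1 (Ht i _ _ _)).
have M2 : forall x y : C, ternary_op C t x x y = y.
  move=> x y; apply: (transfer Hv (a := o0) (b := o0) (c := o1) (d := o1) _ x y x) => i a b c /=.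
  by rewrite (proj2 (Ht i _ _ _)).
have CP := maltsev_cp M1 M2; split => //.
apply: (majority_cd (m := mterm t)) => // x y; split.
- apply: (transfer Hv (a := o0) (b := o0) (c := o1) (d := o0) _ x y x) => i a b c /=.
  by case: (mterm_maj (Ht i) a b).
- apply: (transfer Hv (a := o0) (b := o1) (c := o0) (d := o0) _ x y x) => i a b c /=.
  by case: (mterm_maj (Ht i) a b).
- apply: (transfer Hv (a := o1) (b := o0) (c := o0) (d := o0) _ x y x) => i a b c /=.
  by case: (mterm_maj (Ht i) a b).
Qed.

Definition frel F (I : Type) (B : I -> algebra F) (f : forall i, ('I_3 -> B i) -> B i) : Prop :=
  exists t : term F 'I_3, forall i a, f i a = eval (B i) a t.
Arguments frel {F I} B f.

Lemma frel_op F (I : Type) (B : I -> algebra F) f0 (args : 'I_(arity f0) -> {f | frel B f}) :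
  frel B (fun i a => interp (B i) f0 (fun k => sval (args k) i a)).
Proof.
have [ts Hts] := fchoice (fun k => proj2_sig (args k)).
exists (App f0 ts) => i a /=; congr (interp _ f0); apply: functional_extensionality => k; exact: Hts.
Qed.

Definition FrA F (I : Type) (B : I -> algebra F) : algebra F :=
  Algebra {f | frel B f} (fun f0 args => exist _ _ (frel_op args)).
Arguments FrA {F I} B.

Lemma eval_Fr F (I : Type) (B : I -> algebra F) X (v : X -> FrA B) t :
  sval (eval (FrA B) v t) = fun i a => eval (B i) (fun k => sval (v k) i a) t.
Proof.
elim: t => [x|f ts IH] /=.
  by apply: functional_extensionality_dep => i; apply: functional_extensionality.
apply: functional_extensionality_dep => i; apply: functional_extensionality => a.
congr (interp _ f); apply: functional_extensionality => k; by rewrite IH.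
Qed.

Lemma Fr_var F (I : Type) (B : I -> algebra F) : in_variety_gen B (FrA B).
Proof.
move=> n s t H v; apply: sig_eq; rewrite !eval_Fr.
apply: functional_extensionality_dep => i; apply: functional_extensionality => a; exact: H.
Qed.

Definition genF F (I : Type) (B : I -> algebra F) (k : 'I_3) : FrA B :=
  exist (frel B) (fun i a => a k) (ex_intro (fun t => forall i a, a k = eval (B i) a t) (Var k) (fun i a => erefl)).
Arguments genF {F I} B k.

Lemma ker_cong F (I : Type) (B : I -> algebra F) i a :
  congruence (FrA B) (fun p q => sval p i a = sval q i a).
Proof.
split => //; first by move=> x y z -> ->.
move=> f p q H /=; congr (interp _ f); apply: functional_extensionality => k; exact: H.
Qed.

Definition pcong F (C : algebra F) (p q : C) (r s : C) : Prop :=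
  forall th, congruence C th -> th p q -> th r s.

Lemma pcong_cong F (C : algebra F) p q : congruence C (pcong p q).
Proof.
split.
- by move=> x th [? _ _ _].
- by move=> x y H th Hth Hpq; case: Hth (H th Hth Hpq) => _ ? _ _; auto.
- by move=> x y z H1 H2 th Hth Hpq; case: (Hth) (H1 th Hth Hpq) (H2 th Hth Hpq) => _ _ Ht _; apply: Ht.
- by move=> f a b H th Hth Hpq; case: (Hth) => _ _ _ Hc; apply: Hc => k; exact: H.
Qed.

Lemma c3_maj F (I : Type) (B : I -> algebra F) : cond3 B -> majority_term B.
Proof.
move=> [H3 _]; have [CD CP] := H3 _ (@Fr_var F I B).
pose X := genF B.
have Hal := pcong_cong (X o0) (X o2).
have Hbe := pcong_cong (X o0) (X o1).
have Hga := pcong_cong (X o1) (X o2).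
have Hj : cong_meet (pcong (X o0) (X o2)) (cong_join _ (pcong (X o0) (X o1)) (pcong (X o1) (X o2))) (X o0) (X o2).
  split; first by [].
  move=> th [_ _ Ht _] K1 K2; apply: (Ht _ (X o1)); [apply: K1 | apply: K2]; by [].
have := (CD _ _ _ Hal Hbe Hga _ _).1 Hj.
move/(join_comp CP (meet_cong Hal Hbe) (meet_cong Hal Hga)) => [w [[A1 B1] [A2 G2]]].
have [m Hm] := proj2_sig w.
exists m => i x y; rewrite /ternary_op -!Hm; split.
- by have := B1 _ (@ker_cong F I B i (v3 x x y)) erefl.
- by have := A1 _ (@ker_cong F I B i (v3 x y x)) erefl.
- by have := G2 _ (@ker_cong F I B i (v3 y x x)) erefl.
Qed.

Lemma var_subprod F (I : Type) (B : I -> algebra F) i j (S : prod_alg (B i) (B j) -> Prop)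
  (HS : subuniverse _ S) : in_variety_gen B (sub_alg HS).
Proof.
move=> n s t H v; apply: sig_eq; rewrite !eval_sub !eval_prod; congr pair; exact: H.
Qed.

Lemma cp_rect F (A B : algebra F) (S : prod_alg A B -> Prop) (HS : subuniverse _ S) :
  cong_permutable (sub_alg HS) -> Rect S.
Proof.
move=> CP a a' b0 b H1 H2 H3.
have E1 : congruence (sub_alg HS) (fun p q => (sval p).1 = (sval q).1).
  split => //; first by move=> x y z -> ->.
  move=> f p q H /=; congr (interp _ f); apply: functional_extensionality => k; exact: H.
have E2 : congruence (sub_alg HS) (fun p q => (sval p).2 = (sval q).2).
  split => //; first by move=> x y z -> ->.
  move=> f p q H /=; congr (interp _ f); apply: functional_extensionality => k; exact: H.
have [w [W1 W2]] := (CP _ _ E2 E1 (exist _ _ H1) (exist _ _ H3)).1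
   (ex_intro _ (exist _ _ H2) (conj erefl erefl)).
by case: w W1 W2 => [[c d] Hcd] /= Q1 Q2; rewrite Q1 -Q2.
Qed.

Lemma c3_c4 F (I : Type) (B : I -> algebra F) :
  (forall i, finite_algebra (B i)) -> cond3 B -> cond4 B.
Proof.
move=> HBfin H3; split; first exact: c3_maj.
move=> i j S HS; apply: (goursat HS).
- apply: cp_rect; exact: (proj2 (H3.1 _ (@var_subprod F I B i j S HS))).
- exact: H3.2.
- exact: H3.2.
- by case: (HBfin j) => [[x] _]; constructor.
Qed.

Theorem theorem3p2 (F : signature) (I : finType) (B : I -> algebra F)
    (HBfin : forall i, finite_algebra (B i)) (HI : inhabited I) :
  [/\ cond1 B <-> cond2 B, cond1 B <-> cond3 B & cond1 B <-> cond4 B].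
Proof.
have H14 : cond1 B -> cond4 B := @c1_c4 F I B HBfin.
have H42 : cond4 B -> cond2 B := @c4_c2 F I B HBfin HI.
have H21 : cond2 B -> cond1 B := @c2_c1 F I B HBfin.
have H13 : cond1 B -> cond3 B := @c1_c3 F I B.
have H34 : cond3 B -> cond4 B := @c3_c4 F I B HBfin.
split; split => H.
- exact: H42 (H14 H).
- exact: H21 H.
- exact: H13 H.
- exact: H21 (H42 (H34 H)).
- exact: H14 H.
- exact: H21 (H42 H).
Qed.
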